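(* If $C$ is a free $E$-linear code of length $2n$, then $SHull(C)$ is also free.
   Context: $E=\langle \kappa,\tau \mid 2\kappa=2\tau=0,\ \kappa^2=\kappa,\ \tau^2=\tau,\ \kappa\tau=\kappa,\ \tau\kappa=\tau\rangle$ is the non-unital ring $\{0,\kappa,\tau,\zeta\}$, $\zeta=\kappa+\tau$, with $e\kappa=e\tau=e$, $e\zeta=0$ for all $e\in E$. Every $e\in E$ is uniquely $u\kappa+v\zeta$ ($u,v\in\mathbb{F}_2$); $\pi(u\kappa+v\zeta)=u$, componentwise. An $E$-linear code of length $2n$ is a left $E$-submodule $C\subseteq E^{2n}$; $C_{Res}=\pi(C)$, $C_{Tor}=\{v\in\mathbb{F}_2^{2n}:\zeta v\in C\}$ (componentwise, $0\cdot\zeta=0,1\cdot\zeta=\zeta$); $C$ is free if $C_{Res}=C_{Tor}$. Symplectic inner product: $\langle (u|v),(u'|v')\rangle_s=\sum_i u_iv'_i+\sum_i v_iu'_i$. $C^{\perp_S}=\{z\in E^{2n}:\langle z,w\rangle_s=\langle w,z\rangle_s=0\ \forall w\in C\}$, $SHull(C)=C\cap C^{\perp_S}$. *)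

(* Defs.v *)
From mathcomp Require Import all_boot.
Set Implicit Arguments. Unset Strict Implicit. Unset Printing Implicit Defensive.

(* The non-unital ring E = {0, kappa, tau, zeta}, zeta = kappa + tau.
   An element u*kappa + v*zeta (u v in F_2) is encoded as the pair (u, v). *)
Definition E : finType := (bool * bool)%type.
Definition E0 : E := (false, false).
Definition Ekappa : E := (true, false).
Definition Ezeta : E := (false, true).
Definition Etau : E := (true, true).

Definition Eadd (x y : E) : E := (addb x.1 y.1, addb x.2 y.2).
(* multiplication: e*kappa = e*tau = e, e*zeta = 0, bilinear; hence
   e * (a kappa + b zeta) = a e. *)
Definition Emul (x y : E) : E := if y.1 then x else E0.
Definition Epi (x : E) : bool := x.1.

(* words of length 2n, written (u | v) with u = first n, v = last n coords *)
Definition word (n : nat) := {ffun 'I_(n + n) -> E}.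
Definition bword (n : nat) := {ffun 'I_(n + n) -> bool}.

Definition wadd n (x y : word n) : word n := [ffun i => Eadd (x i) (y i)].
Definition wscale n (e : E) (x : word n) : word n := [ffun i => Emul e (x i)].
Definition wzero n : word n := [ffun => E0].

Definition Elinear n (C : {set word n}) : Prop :=
  [/\ wzero n \in C,
      (forall x y, x \in C -> y \in C -> wadd x y \in C) &
      (forall (e : E) x, x \in C -> wscale e x \in C)].

Definition Cres n (C : {set word n}) : {set bword n} :=
  [set ([ffun i => Epi (c i)] : bword n) | c : word n in C].
Definition zeta_lift n (v : bword n) : word n :=
  [ffun i => if v i then Ezeta else E0].
Definition Ctor n (C : {set word n}) : {set bword n} :=
  [set v | zeta_lift v \in C].
Definition Efree n (C : {set word n}) : Prop := Cres C = Ctor C.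

Definition symp n (x y : word n) : E :=
  Eadd (\big[Eadd/E0]_(i < n) Emul (x (lshift n i)) (y (rshift n i)))
       (\big[Eadd/E0]_(i < n) Emul (x (rshift n i)) (y (lshift n i))).

Definition sdual n (C : {set word n}) : {set word n} :=
  [set z | [forall w in C, (symp z w == E0) && (symp w z == E0)]].
Definition SHull n (C : {set word n}) : {set word n} := C :&: sdual C.

(* Main.v *)
Require Import Defs.
From mathcomp Require Import all_boot.
Set Implicit Arguments. Unset Strict Implicit. Unset Printing Implicit Defensive.

Definition bs n (F : 'I_n -> bool) := \big[addb/false]_(i < n) F i.

Lemma symp_E n (x y : word n) : symp x y =
  (bs (fun i => (y (rshift n i)).1 && (x (lshift n i)).1) (+)
   bs (fun i => (y (lshift n i)).1 && (x (rshift n i)).1),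
   bs (fun i => (y (rshift n i)).1 && (x (lshift n i)).2) (+)
   bs (fun i => (y (lshift n i)).1 && (x (rshift n i)).2)).
Proof.
rewrite /symp /Eadd /bs.
have m1 : {morph (fun e : E => e.1) : a b / Eadd a b >-> addb a b} by [].
have m2 : {morph (fun e : E => e.2) : a b / Eadd a b >-> addb a b} by [].
rewrite !(big_morph _ m1 (erefl : E0.1 = false)) !(big_morph _ m2 (erefl : E0.2 = false)).
congr (_ (+) _, _ (+) _); apply: eq_bigr => i _; rewrite /Emul; by case: (_ (_ i)).1.
Qed.

Lemma bsE n (F G : 'I_n -> bool) : (forall i, F i = G i) -> bs F = bs G.
Proof. by move=> H; apply: eq_bigr => i _; exact: H. Qed.

Lemma bs0 n (F : 'I_n -> bool) : (forall i, F i = false) -> bs F = false.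
Proof. by move=> H; rewrite /bs big1. Qed.

Ltac bt := rewrite /wscale /wadd /zeta_lift ?ffunE /Emul /Eadd /Epi /=;
  repeat match goal with
  | |- context [?f ?j] => lazymatch type of j with ordinal _ =>
        let t := type of (f j) in let t := eval cbv beta in t in
        lazymatch t with
        | E => case: (f j) => [[] []]
        | (bool * bool)%type => case: (f j) => [[] []]
        | bool => case: (f j) end end
  end; by [].

Ltac killbs := repeat match goal with |- context [bs ?F] =>
  rewrite (@bs0 _ F); [| by move=> i; bt] end.

Theorem mainTheorem15 (n : nat) (C : {set word n}) :
  Elinear C -> Efree C -> Efree (SHull C).
Proof.
move=> [C0 CD CS] Hfree.
have CtorC : forall v, (zeta_lift v \in C) = (v \in Cres C).
  by move=> v; rewrite Hfree inE.
rewrite /Efree; apply/setP => v; apply/idP/idP.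
- case/imsetP => c; rewrite /SHull inE => /andP [cC cD] ->.
  rewrite inE /SHull inE.
  have -> : zeta_lift [ffun i => Epi (c i)] = wscale Ezeta c.
    by apply/ffunP => i; rewrite !ffunE /Epi /Emul; case: (c i) => [[] []].
  rewrite CS //=; rewrite inE; apply/forallP => w; apply/implyP => wC.
  move: cD; rewrite inE => /forallP /(_ w) /implyP /(_ wC) /andP [/eqP H1 _].
  move: H1; rewrite !symp_E => -[H1 _].
  apply/andP; split; apply/eqP.
  + killbs.
    killbs.
    rewrite /E0; congr (_, _); rewrite -[RHS]H1;
      congr (_ (+) _); apply: bsE => i; bt.
  + killbs.
    killbs.
    by [].
- rewrite inE /SHull inE => /andP [zC zD].
  move: (zC); rewrite CtorC => /imsetP [c cC Hv].
  have Hz : forall w, w \in C ->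
    bs (fun i => (w (rshift n i)).1 && v (lshift n i)) (+)
    bs (fun i => (w (lshift n i)).1 && v (rshift n i)) = false.
    move=> w wC.
    move: zD; rewrite inE => /forallP /(_ w) /implyP /(_ wC) /andP [/eqP H1 _].
    move: H1; rewrite symp_E => -[_ H1]; rewrite -H1.
    by congr (_ (+) _); apply: bsE => i; rewrite !ffunE; case: (v _).
  apply/imsetP; exists (wscale Ekappa c); last first.
    by rewrite Hv; apply/ffunP => i; rewrite !ffunE /Epi /Emul; case: (c i) => [[] []].
  rewrite inE CS // inE; apply/forallP => w; apply/implyP => wC.
  have w2C : [ffun i => (w i).2] \in Cres C.
    rewrite -CtorC.
    have -> : zeta_lift [ffun i => (w i).2] = wadd w (wscale Ekappa w).
      by apply/ffunP => i; rewrite !ffunE /Emul /Eadd; case: (w i) => [[] []].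
    by rewrite CD // CS.
  case/imsetP: w2C => w' w'C Hw'.
  have vc : forall i, v i = (c i).1 by move=> i; rewrite Hv ffunE.
  apply/andP; split; apply/eqP; rewrite symp_E.
  + killbs.
    killbs.
    rewrite /E0; congr (_, _); rewrite -[RHS](Hz w wC);
      congr (_ (+) _); apply: bsE => i; rewrite ?vc; bt.
  + have := Hz w wC; have := Hz w' w'C.
    have e2 : forall i, (w' i).1 = (w i).2.
      by move=> i; move/ffunP: Hw' => /(_ i); rewrite !ffunE.
    move=> H2 H1.
    rewrite /E0; congr (_, _); [rewrite -[RHS]H1 | rewrite -[RHS]H2]; rewrite addbC;
      congr (_ (+) _); apply: bsE => i; rewrite ?e2 ?vc; bt.
Qed.
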